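(* Let $\mathcal{H}=\mathbb{C}^2$ and let $\mathcal{D}=\{\Psi_\rho : \rho \text{ a density operator on } \mathcal{H}\}$ be the set of depolarizing channels, where $\Psi_\rho(A)=(\operatorname{tr}A)\rho$ for all $A\in\mathcal{L}(\mathcal{H})$. For every density operator $\tau$ on $\mathcal{H}\otimes\mathcal{H}$, $$C(\tau,\mathcal{D})=\max_{\Psi\in\mathcal{D}}\operatorname{tr}[\tau J_\Psi]=\frac12\left(1+\|\boldsymbol{b}(\tau_2)\|\right),$$ where $\tau_2=\operatorname{tr}_1\tau$.
   Context: $\{|0\rangle,|1\rangle\}$ is the computational basis of $\mathcal{H}=\mathbb{C}^2$. For a linear map $\Psi$ on $\mathcal{L}(\mathcal{H})$, its Choi operator is $J_\Psi=(\mathrm{id}\otimes\Psi)(P'_+)$ with $P'_+=\sum_{i,j=0}^1|i\rangle\langle j|\otimes|i\rangle\langle j|$. $\operatorname{tr}_1$ denotes the partial trace over the first tensor factor. For an operator $X$ on $\mathcal{H}$, its Bloch vector is $\boldsymbol{b}(X)\in\mathbb{R}^3$ with $b(X)_i=\operatorname{tr}[\sigma_i X]$, $\sigma_1,\sigma_2,\sigma_3$ being the Pauli matrices, and $\|\cdot\|$ is the Euclidean norm on $\mathbb{R}^3$. *)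

(* Defs.v *)
From HB Require Import structures.
From mathcomp Require Import all_boot all_order all_algebra.
From mathcomp Require Import reals.
From mathcomp Require Export complex mxtens.
Set Implicit Arguments. Unset Strict Implicit. Unset Printing Implicit Defensive.
Import Order.TTheory GRing.Theory Num.Theory.
Local Open Scope ring_scope.

Section QDefs.
Variable C : numClosedFieldType.

Definition adjmx {m n} (A : 'M[C]_(m, n)) : 'M[C]_(n, m) := (map_mx Num.conj A)^T.

Definition density {n} (A : 'M[C]_n) : Prop :=
  adjmx A = A /\ (forall v : 'cV[C]_n, 0 <= (adjmx v *m A *m v) 0 0) /\ \tr A = 1.

(* Choi operator J_Psi = sum_{i,j} |i><j| (x) Psi(|i><j|), first tensor factor
   indexed by the high-order part of mxtens_index *)
Definition choi {n} (Psi : 'M[C]_n -> 'M[C]_n) : 'M[C]_(n * n) :=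
  \sum_(i < n) \sum_(j < n) (delta_mx i j *t Psi (delta_mx i j)).

Definition ptrace1 {n} (T : 'M[C]_(n * n)) : 'M[C]_n :=
  \matrix_(k, l) \sum_(i < n) T (mxtens_index (i, k)) (mxtens_index (i, l)).

Definition depol {n} (rho : 'M[C]_n) (A : 'M[C]_n) : 'M[C]_n := \tr A *: rho.

Definition depol_channels {n} (Psi : 'M[C]_n -> 'M[C]_n) : Prop :=
  exists rho : 'M[C]_n, density rho /\ Psi = depol rho.

Definition sigma1 : 'M[C]_2 := \matrix_(i, j) (if i != j then 1 else 0).
Definition sigma2 : 'M[C]_2 :=
  \matrix_(i, j) (if ((i : nat) == 0%N) && ((j : nat) == 1%N) then - 'i
                  else if ((i : nat) == 1%N) && ((j : nat) == 0%N) then 'i else 0).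
Definition sigma3 : 'M[C]_2 :=
  \matrix_(i, j) (if i == j then (if (i : nat) == 0%N then 1 else -1) else 0).

Definition pauli (k : 'I_3) : 'M[C]_2 :=
  if (k : nat) == 0%N then sigma1 else if (k : nat) == 1%N then sigma2 else sigma3.

Definition bloch (X : 'M[C]_2) : 'I_3 -> C := fun k => \tr (pauli k *m X).

Definition bloch_norm (X : 'M[C]_2) : C := sqrtC (\sum_(k < 3) `|bloch X k| ^+ 2).

End QDefs.

(* Main.v *)
Require Import Defs.
From HB Require Import structures.
From mathcomp Require Import all_boot all_order all_algebra.
From mathcomp Require Import reals complex mxtens.
From mathcomp Require Import ring lra.
Import Order.TTheory GRing.Theory Num.Theory.
Local Open Scope ring_scope.
Section Gen.
Variable C : numClosedFieldType.

Lemma sum_tens m n (F : 'I_(m * n) -> C) :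
  \sum_(k < m * n) F k = \sum_(i < m) \sum_(j < n) F (mxtens_index (i, j)).
Proof.
rewrite pair_big /=.
pose h := fun p : prod (ordinal m) (ordinal n) => mxtens_index p.
rewrite (reindex h); last first.
  by exists (fun k : ordinal (m * n) => mxtens_unindex k) => k _; rewrite /h (mxtens_indexK, mxtens_unindexK).
by apply: eq_bigr => -[i j].
Qed.

Lemma tr_delta n (i j : 'I_n) : \tr (delta_mx i j : 'M[C]_n) = (i == j)%:R.
Proof.
rewrite /mxtrace (bigD1 i) //= big1 ?addr0 => [|k ne]; rewrite mxE ?eqxx //=.
by rewrite (negbTE ne).
Qed.

Lemma choi_depolE n (rho : 'M[C]_n) a b c d :
  choi (depol rho) (mxtens_index (a, b)) (mxtens_index (c, d)) = (a == c)%:R * rho b d.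
Proof.
rewrite /choi /depol summxE.
under eq_bigr => i _ do rewrite summxE.
under eq_bigr => i _ do under eq_bigr => j _ do rewrite tensmxE !mxE tr_delta.
rewrite (bigD1 a) //= [X in _ + X]big1 ?addr0; last first.
  move=> i ne; rewrite big1 // => j _.
  by rewrite (eq_sym a) (negbTE ne) mul0r.
rewrite (bigD1 c) //= [X in _ + X]big1 ?addr0; last first.
  by move=> j ne; rewrite (eq_sym c) (negbTE ne) andbF mul0r.
rewrite !eqxx /= mul1r.
by case: eqP => _; rewrite ?mul1r ?mul0r.
Qed.

Lemma tr_choi_depol n (tau : 'M[C]_(n * n)) rho :
  \tr (tau *m choi (depol rho)) = \tr (ptrace1 tau *m rho).
Proof.
rewrite /mxtrace sum_tens.
under eq_bigr => a _ do under eq_bigr => b _ do rewrite mxE sum_tens.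
have E a b : \sum_(i < n) \sum_(j < n) tau (mxtens_index (a, b)) (mxtens_index (i, j)) *
    choi (depol rho) (mxtens_index (i, j)) (mxtens_index (a, b))
  = \sum_(j < n) tau (mxtens_index (a, b)) (mxtens_index (a, j)) * rho j b.
  rewrite (bigD1 a) //= [X in _ + X]big1 ?addr0.
    by apply: eq_bigr => j _; rewrite choi_depolE eqxx mul1r.
  move=> i ne; rewrite big1 // => j _.
  by rewrite choi_depolE (negbTE ne) mul0r mulr0.
under eq_bigr => a _ do under eq_bigr => b _ do rewrite E.
under [RHS]eq_bigr => i _ do rewrite mxE.
under [RHS]eq_bigr => i _ do under eq_bigr => k _ do rewrite mxE mulr_suml.
under [RHS]eq_bigr => i _ do rewrite exchange_big.
by rewrite [RHS]exchange_big.
Qed.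

Lemma ptrace1_herm n (T : 'M[C]_(n * n)) : adjmx T = T -> adjmx (ptrace1 T) = ptrace1 T.
Proof.
move=> h; apply/matrixP => k l; rewrite /adjmx !mxE rmorph_sum; apply: eq_bigr => i _.
have := congr1 (fun M : 'M[C]_(n * n) => M (mxtens_index (i, k)) (mxtens_index (i, l))) h.
by rewrite /adjmx !mxE.
Qed.

Lemma ptrace1_tr n (T : 'M[C]_(n * n)) : \tr (ptrace1 T) = \tr T.
Proof.
rewrite /mxtrace [RHS]sum_tens.
under eq_bigr => k _ do rewrite mxE.
by rewrite exchange_big.
Qed.
End Gen.

Local Open Scope complex_scope.
Section T.
Variable R : realType.
Local Notation i1 := (lift ord0 ord0 : 'I_2).

Lemma conjE (a b : R) : Num.conj (a +i* b) = a -i* b.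
Proof. reflexivity. Qed.

Lemma sqrtC_real (r : R) : 0 <= r -> sqrtC (r%:C) = (Num.sqrt r)%:C.
Proof.
move=> r0.
have -> : r%:C = ((Num.sqrt r)%:C) ^+ 2 by rewrite -rmorphXn /= sqr_sqrtr.
by rewrite sqrCK // ler0c sqrtr_ge0.
Qed.

Lemma bloch_normE (X : 'M[R[i]]_2) a d c1 c2 :
  X ord0 ord0 = a%:C -> X i1 i1 = d%:C -> X ord0 i1 = c1 +i* c2 ->
  X i1 ord0 = c1 -i* c2 ->
  bloch_norm X = (Num.sqrt ((a - d) ^+ 2 + 4%:R * (c1 ^+ 2 + c2 ^+ 2)))%:C.
Proof.
move=> E00 E11 E01 E10.
rewrite /bloch_norm /bloch /pauli /mxtrace !big_ord_recl !big_ord0 /= !mxE.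
rewrite !big_ord_recl !big_ord0 /= !mxE /= E00 E11 E01 E10.
simpc.
have nE (x y : R) : Normc.normc (x +i* y) * Normc.normc (x +i* y) = x ^+ 2 + y ^+ 2.
  by rewrite /= -expr2 sqr_sqrtr // addr_ge0 // sqr_ge0.
rewrite !nE -complexr0 sqrtC_real; last by rewrite !addr_ge0 // sqr_ge0.
congr (Num.sqrt _)%:C.
ring.
Qed.

Lemma psd2 (rho : 'M[R[i]]_2) : density rho -> forall x y,
  0 <= Num.conj x * (rho ord0 ord0 * x + rho ord0 i1 * y)
     + Num.conj y * (rho i1 ord0 * x + rho i1 i1 * y).
Proof.
case=> _ [H _] x y; have := H (\col_i (if i == ord0 then x else y)).
rewrite /adjmx !mxE !big_ord_recl !big_ord0 /= !mxE !big_ord_recl !big_ord0 /= !mxE /=.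
move=> h; apply: le_trans h _; rewrite le_eqVlt; apply/orP; left; apply/eqP; ring.
Qed.

Lemma core_upper (a d c1 c2 p s q1 q2 : R) : a + d = 1 -> p + s = 1 -> 0 <= p -> 0 <= s ->
  q1 ^+ 2 + q2 ^+ 2 <= p * s ->
  (a * p + d * s + 2%:R * (c1 * q1 + c2 * q2)) * 2%:R <=
  1 + Num.sqrt ((a - d) ^+ 2 + 4%:R * (c1 ^+ 2 + c2 ^+ 2)).
Proof.
move=> ad ps p0 s0 q.
set W := (a - d) ^+ 2 + _.
have W0 : 0 <= W by rewrite /W addr_ge0 ?sqr_ge0 // mulr_ge0 // addr_ge0 // sqr_ge0.
have r0 := sqrtr_ge0 W; have r2 := sqr_sqrtr W0.
set r := Num.sqrt W in r0 r2 *.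
set L := (a - d) * (p - s) + 4%:R * (c1 * q1 + c2 * q2).
suff : L <= r.
  move=> h.
  have -> : (a * p + d * s + 2%:R * (c1 * q1 + c2 * q2)) * 2%:R = (a + d) * (p + s) + L.
    by rewrite /L; ring.
  by rewrite ad ps mul1r; lra.
have CS : L ^+ 2 <= W * ((p - s) ^+ 2 + 4%:R * (q1 ^+ 2 + q2 ^+ 2)).
  rewrite -subr_ge0.
  have -> : W * ((p - s) ^+ 2 + 4%:R * (q1 ^+ 2 + q2 ^+ 2)) - L ^+ 2 =
    ((a - d) * (2%:R * q1) - 2%:R * c1 * (p - s)) ^+ 2 +
    ((a - d) * (2%:R * q2) - 2%:R * c2 * (p - s)) ^+ 2 +
    (2%:R * c1 * (2%:R * q2) - 2%:R * c2 * (2%:R * q1)) ^+ 2.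
    by rewrite /W /L; ring.
  by rewrite !addr_ge0 ?sqr_ge0.
have H1 : (p - s) ^+ 2 + 4%:R * (q1 ^+ 2 + q2 ^+ 2) <= 1 by nra.
have : L ^+ 2 <= r ^+ 2 by rewrite r2; nra.
case: (lerP L 0) => [L0 _ | L0 h]; first by apply: le_trans L0 r0.
by rewrite -(ler_pXn2r (n:=2)) // ?nnegrE ?(ltW L0).
Qed.

Lemma herm_entry (X : 'M[R[i]]_2) : adjmx X = X -> forall i j, X j i = Num.conj (X i j).
Proof.
move=> h i j; have := congr1 (fun M : 'M[R[i]]_2 => M i j) h; rewrite /adjmx !mxE => <-.
by rewrite conjCK.
Qed.

Lemma herm_real (z : R[i]) : z = Num.conj z -> z = (complex.Re z)%:C.
Proof.
case: z => u v /= [] /eqP; rewrite -subr_eq0 opprK -mulr2n mulrn_eq0 /= => /eqP ->.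
by [].
Qed.

Lemma rectE (z : R[i]) : z = complex.Re z +i* complex.Im z. Proof. by case: z. Qed.

Lemma upper (X rho : 'M[R[i]]_2) : adjmx X = X -> \tr X = 1 -> density rho ->
  \tr (X *m rho) <= (1 + bloch_norm X) / 2%:R.
Proof.
move=> hX tX dR.
have hR := @herm_entry rho (proj1 dR).
have tR := proj2 (proj2 dR).
have P := @psd2 rho dR.
have hX' := @herm_entry X hX.
move: tX tR; rewrite /mxtrace !big_ord_recl !big_ord0 /= => tX tR.
have E00 := @herm_real _ (hX' ord0 ord0).
have E11 := @herm_real _ (hX' i1 i1).
have F00 := @herm_real _ (hR ord0 ord0).
have F11 := @herm_real _ (hR i1 i1).
have E10 := hX' ord0 i1. have F10 := hR ord0 i1.
rewrite [X ord0 i1]rectE in E10. rewrite [rho ord0 i1]rectE in F10.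
have E01 := rectE (X ord0 i1). have F01 := rectE (rho ord0 i1).
move: E00 E11 E10 E01 F00 F11 F10 F01.
set a := complex.Re (X ord0 ord0); set d := complex.Re (X i1 i1).
set c1 := complex.Re (X ord0 i1); set c2 := complex.Im (X ord0 i1).
set p := complex.Re (rho ord0 ord0); set s := complex.Re (rho i1 i1).
set q1 := complex.Re (rho ord0 i1); set q2 := complex.Im (rho ord0 i1).
move=> E00 E11 E10 E01 F00 F11 F10 F01.
rewrite conjE in E10. rewrite conjE in F10.
rewrite (@bloch_normE X a d c1 c2 E00 E11 E01 E10).
rewrite ler_pdivlMr ?ltr0n //.
rewrite !mxE !big_ord_recl !big_ord0 /=.
rewrite E00 E11 E10 E01 F00 F11 F10 F01 in P tX tR *.
move: tX tR; simpc => -[ad] [ps].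
have := P (1 +i* 0) (0 +i* 0); simpc.
have := P (0 +i* 0) (1 +i* 0); simpc.
have := P ((- q1) +i* (- q2)) (p +i* 0); simpc.
have := P (s +i* 0) ((- q1) +i* q2); simpc.
move=> /andP[_ h1] /andP[_ h2] /andP[_ s0] /andP[_ p0].
have hq : q1 ^+ 2 + q2 ^+ 2 <= p * s.
  have e : (p + s) * (p * s - (q1 ^+ 2 + q2 ^+ 2)) =
    (s * (p * s + (- (q1 * q1) - q2 * q2)) +
   (- (q1 * (q1 * s - s * q1)) + q2 * (- (q2 * s) + s * q2))) +
   (- (q1 * (- (p * q1) + q1 * p)) - q2 * (- (p * q2) + q2 * p) +
   p * (- (q1 * q1) - q2 * q2 + s * p)) by ring.
  rewrite ps mul1r in e; rewrite -subr_ge0 e; exact: addr_ge0.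
apply/andP; split; first by apply/eqP; ring.
have := @core_upper a d c1 c2 p s q1 q2 ad ps p0 s0 hq.
move=> h; rewrite (_ : (1 + 1 : R) = 2%:R) //.
set u := c1 * q1 + c2 * q2.
by rewrite (_ : a * p + u + (u + d * s) = a * p + d * s + 2%:R * u) //; ring.
Qed.

Lemma herm2 (X : 'M[R[i]]_2) : adjmx X = X -> exists a d c1 c2,
  [/\ X ord0 ord0 = a%:C, X i1 i1 = d%:C, X ord0 i1 = c1 +i* c2 & X i1 ord0 = c1 -i* c2].
Proof.
move=> hX; have hX' := @herm_entry X hX.
have E00 := @herm_real _ (hX' ord0 ord0).
have E11 := @herm_real _ (hX' i1 i1).
have E10 := hX' ord0 i1.
rewrite [X ord0 i1]rectE conjE in E10.
by exists (complex.Re (X ord0 ord0)), (complex.Re (X i1 i1)),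
  (complex.Re (X ord0 i1)), (complex.Im (X ord0 i1)); split => //; exact: rectE.
Qed.

Lemma quad_nonneg (p s q1 q2 x1 x2 y1 y2 : R) : 0 <= p -> 0 <= s ->
  q1 ^+ 2 + q2 ^+ 2 <= p * s ->
  0 <= p * (x1 ^+ 2 + x2 ^+ 2) + s * (y1 ^+ 2 + y2 ^+ 2)
       + 2%:R * (q1 * (x1 * y1 + x2 * y2) - q2 * (x1 * y2 - x2 * y1)).
Proof.
move=> p0 s0 e.
have [p0e|pp] := eqVneq p 0.
  rewrite p0e in e *.
  have h0 : q1 ^+ 2 + q2 ^+ 2 = 0.
    by apply: le_anti; rewrite addr_ge0 ?sqr_ge0 // andbT; move: e; rewrite mul0r.

  move/eqP: h0; rewrite paddr_eq0 ?sqr_ge0 // !sqrf_eq0 => /andP[/eqP -> /eqP ->].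
  by rewrite !mul0r subr0 mulr0 !add0r addr0 mulr_ge0 // addr_ge0 // sqr_ge0.
have pg : 0 < p by rewrite lt_def pp.
rewrite -(pmulr_rge0 _ pg).
have -> : p * (p * (x1 ^+ 2 + x2 ^+ 2) + s * (y1 ^+ 2 + y2 ^+ 2)
       + 2%:R * (q1 * (x1 * y1 + x2 * y2) - q2 * (x1 * y2 - x2 * y1))) =
  (p * x1 + q1 * y1 - q2 * y2) ^+ 2 + (p * x2 + q1 * y2 + q2 * y1) ^+ 2
  + (p * s - (q1 ^+ 2 + q2 ^+ 2)) * (y1 ^+ 2 + y2 ^+ 2) by ring.
by rewrite !addr_ge0 ?sqr_ge0 // mulr_ge0 ?subr_ge0 // addr_ge0 ?sqr_ge0.
Qed.

Lemma exist_opt (X : 'M[R[i]]_2) : adjmx X = X -> \tr X = 1 ->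
  exists rho, density rho /\ \tr (X *m rho) = (1 + bloch_norm X) / 2%:R.
Proof.
move=> hX tX.
have [a [d [c1 [c2 [E00 E11 E01 E10]]]]] := @herm2 X hX.
move: tX; rewrite /mxtrace !big_ord_recl big_ord0 /= E00 E11; simpc => -[ad].
rewrite (@bloch_normE X a d c1 c2 E00 E11 E01 E10).
have W0 : 0 <= (a - d) ^+ 2 + 4%:R * (c1 ^+ 2 + c2 ^+ 2).
  by rewrite addr_ge0 ?sqr_ge0 // mulr_ge0 // addr_ge0 // sqr_ge0.
have r0 := sqrtr_ge0 ((a - d) ^+ 2 + 4%:R * (c1 ^+ 2 + c2 ^+ 2)).
have r2 := sqr_sqrtr W0.
move: r0 r2; move: (Num.sqrt _) => r r0 r2.
move: W0; rewrite -r2 => W0.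
have [p pE] : {p : R | p = (1 + (a - d) / r) / 2%:R} by eexists.
have [s sE] : {s : R | s = (1 - (a - d) / r) / 2%:R} by eexists.
have [q1 q1E] : {q : R | q = c1 / r} by eexists.
have [q2 q2E] : {q : R | q = c2 / r} by eexists.
pose rho : 'M[R[i]]_2 := \matrix_(i, j)
  if i == ord0 then (if j == ord0 then p%:C else q1 +i* q2)
  else (if j == ord0 then q1 -i* q2 else s%:C).
have key : [/\ 0 <= p, 0 <= s, p + s = 1 & q1 ^+ 2 + q2 ^+ 2 <= p * s].
  have [rz|rnz] := eqVneq r 0.
    rewrite pE sE q1E q2E rz !invr0 !mulr0 addr0 subr0 expr0n /= addr0.
    split; try lra.
  have [t tE] : {t : R | t = (a - d) / r} by eexists.
  have rp : 0 < r by rewrite lt_def rnz r0.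
  have t2 : t ^+ 2 * r ^+ 2 = (a - d) ^+ 2 by rewrite tE; field.
  have qW : (q1 ^+ 2 + q2 ^+ 2) * 4%:R * r ^+ 2 = r ^+ 2 - (a - d) ^+ 2.
    by rewrite q1E q2E [X in _ = X - _]r2; field.
  have Wp : 0 < r ^+ 2 by rewrite exprn_gt0.
  have t1 : t ^+ 2 <= 1.
    by rewrite -(ler_pM2r Wp) t2 mul1r r2 lerDl mulr_ge0 // addr_ge0 ?sqr_ge0.
  have hq : (q1 ^+ 2 + q2 ^+ 2) * 4%:R = 1 - t ^+ 2.
    apply: (mulIf (lt0r_neq0 Wp)); by rewrite qW mulrBl t2 mul1r.
  rewrite pE sE -tE; split; nra.
case: key => p0 s0 ps hq.
exists rho; split; [split; [|split]|].
- apply/matrixP => i j; rewrite /adjmx !mxE.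
  case: i => [[|[|//]]] ?; case: j => [[|[|//]]] ? /=; rewrite conjE ?oppr0 ?opprK //.
- move=> v; rewrite /adjmx !mxE !big_ord_recl !big_ord0 /= !mxE !big_ord_recl !big_ord0 /= !mxE /=.
  case: (v ord0 0) => x1 x2; case: (v i1 0) => y1 y2.
  rewrite !conjE; simpc.
  apply/andP; split; first by apply/eqP; ring.
  have := @quad_nonneg p s q1 q2 x1 x2 y1 y2 p0 s0 hq.
  move=> h; apply: le_trans h _; rewrite le_eqVlt; apply/orP; left; apply/eqP; ring.
- rewrite /mxtrace !big_ord_recl big_ord0 /= !mxE /=.
  simpc; rewrite ps; reflexivity.
- rewrite !big_ord_recl !big_ord0 /= !mxE !big_ord_recl !big_ord0 /= !mxE /=.
  apply: (mulIf (x:=2%:R)); first by rewrite pnatr_eq0.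
  rewrite divfK ?pnatr_eq0 //.
  rewrite (_ : (2%:R : R[i]) = (2%:R)%:C) ?rmorph_nat // (_ : (1 : R[i]) = 1%:C) ?rmorph1 //.
  rewrite E00 E11 E01 E10; simpc.
  congr (_ +i* _); last by ring.
  rewrite pE sE q1E q2E (_ : (1 + 1 : R) = 2%:R) //.
  have [rz|rnz] := eqVneq r 0.
    rewrite rz !invr0 !mulr0 addr0 subr0.
    by rewrite -[RHS]ad; field.
  transitivity ((a + d) + r ^+ 2 / r); last by rewrite ad; field.
  by rewrite r2; field.
Qed.
End T.

Theorem proposition1 (R : realType) (tau : 'M[R[i]]_(2 * 2)) :
  density tau ->
  let v := (1 + bloch_norm (ptrace1 tau)) / 2 in
  (exists Psi : 'M[R[i]]_2 -> 'M[R[i]]_2,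
      depol_channels Psi /\ \tr (tau *m choi Psi) = v) /\
  (forall Psi : 'M[R[i]]_2 -> 'M[R[i]]_2,
      depol_channels Psi -> \tr (tau *m choi Psi) <= v).
Proof.
move=> dT v.
have hX := @ptrace1_herm _ _ tau (proj1 dT).
have tX : \tr (ptrace1 tau) = 1 by rewrite ptrace1_tr (proj2 (proj2 dT)).
split.
  have [rho [dr e]] := @exist_opt R (ptrace1 tau) hX tX.
  exists (depol rho); split; first by exists rho.
  by rewrite tr_choi_depol e.
move=> Psi [rho [dr ->]]; rewrite tr_choi_depol.
exact: (@upper R (ptrace1 tau) rho hX tX dr).
Qed.
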